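(* Let $\mathcal{V},\bar{\mathcal{V}}$ be disjoint finite sets with $|\mathcal{V}|=N$, $|\bar{\mathcal{V}}|=M$, and let $G:2^{\mathcal{V}\cup\bar{\mathcal{V}}}\to\mathbb{R}$ be a submodular, nonnegative set function with $G(\emptyset)=0$ and $G(\mathcal{V}\cup\bar{\mathcal{V}})=0$, with Lovász extension $g(\mathbf{x},\bar{\mathbf{x}})$ ($\mathbf{x}\in\mathbb{R}^N$ indexed by $\mathcal{V}$, $\bar{\mathbf{x}}\in\mathbb{R}^M$ indexed by $\bar{\mathcal{V}}$). Let $\mathbf{x}\in\mathbb{R}^N$ have minimum entry $a$ and maximum entry $b$. Then $g(\mathbf{x},\bar{\mathbf{x}})\ge g(\mathbf{x},\mathcal{P}_{a,b}(\bar{\mathbf{x}}))$ for every $\bar{\mathbf{x}}\in\mathbb{R}^M$. Consequently, for any $a'<a$ and $b'>b$, $$\min_{\bar{\mathbf{x}}\in\mathbb{R}^M}g(\mathbf{x},\bar{\mathbf{x}})=\min_{\bar{\mathbf{x}}\in[a',b']^M}g(\mathbf{x},\bar{\mathbf{x}})=\min_{\bar{\mathbf{x}}\in[a,b]^M}g(\mathbf{x},\bar{\mathbf{x}}).$$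
   Context: Lovász extension: for a set function $F:2^{[n]}\to\mathbb{R}$ with $F(\emptyset)=0$, and $\mathbf{x}\in\mathbb{R}^n$ with entries sorted as $x_{i_1}\ge\cdots\ge x_{i_n}$, $f(\mathbf{x})=\sum_{j=1}^{n-1}F(\{i_1,\dots,i_j\})(x_{i_j}-x_{i_{j+1}})+F([n])x_{i_n}$. A set function $F$ is submodular if $F(\mathcal{S}_1)+F(\mathcal{S}_2)\ge F(\mathcal{S}_1\cup\mathcal{S}_2)+F(\mathcal{S}_1\cap\mathcal{S}_2)$ for all $\mathcal{S}_1,\mathcal{S}_2$. $\mathcal{P}_{a,b}(\bar{\mathbf{x}})$ denotes the vector obtained by projecting each entry of $\bar{\mathbf{x}}$ onto the interval $[a,b]$. *)

(* Defs.v *)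
From HB Require Import structures.
From mathcomp Require Import all_boot all_order all_algebra.
From mathcomp Require Import reals.
Set Implicit Arguments. Unset Strict Implicit. Unset Printing Implicit Defensive.
Import Order.TTheory GRing.Theory Num.Theory.
Local Open Scope ring_scope.

Section Defs.
Variable R : realType.

Definition submodular (T : finType) (F : {set T} -> R) : Prop :=
  forall S1 S2 : {set T}, F (S1 :|: S2) + F (S1 :&: S2) <= F S1 + F S2.

(* Lovasz extension, literally as in the paper: sort the entries of x
   decreasingly, x_{i_1} >= ... >= x_{i_n}, and set
   f(x) = sum_{j=1}^{n-1} F({i_1..i_j}) (x_{i_j} - x_{i_{j+1}}) + F([n]) x_{i_n}.
   (Empty ground set: value 0.) *)
Definition lovasz (T : finType) (F : {set T} -> R) (x : T -> R) : R :=
  let s := sort (fun i j => x j <= x i) (enum T) in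
  match s with
  | [::] => 0
  | i0 :: _ =>
      \sum_(j < (size s).-1)
         F [set k in take j.+1 s] * (x (nth i0 s j) - x (nth i0 s j.+1))
      + F setT * x (last i0 s)
  end.

Definition joinv (N M : nat) (x : 'I_N -> R) (xb : 'I_M -> R) : 'I_N + 'I_M -> R :=
  fun k => match k with inl i => x i | inr j => xb j end.

Definition gext (N M : nat) (G : {set ('I_N + 'I_M)} -> R)
  (x : 'I_N -> R) (xb : 'I_M -> R) : R := lovasz G (joinv x xb).

Definition proj_ab (M : nat) (a b : R) (xb : 'I_M -> R) : 'I_M -> R :=
  fun j => Num.min (Num.max (xb j) a) b.

Definition is_min_on (A : Type) (S : A -> Prop) (f : A -> R) (m : R) : Prop :=
  (exists2 y, S y & f y = m) /\ (forall y, S y -> m <= f y).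

Definition box (M : nat) (lo hi : R) (xb : 'I_M -> R) : Prop :=
  forall j, lo <= xb j <= hi.

End Defs.

(* Main.v *)
Require Import Defs.
From HB Require Import structures.
From mathcomp Require Import all_boot all_order all_algebra.
From mathcomp Require Import reals.
From mathcomp Require boolp.
Set Implicit Arguments. Unset Strict Implicit. Unset Printing Implicit Defensive.
Import Order.TTheory GRing.Theory Num.Theory.
Local Open Scope ring_scope.

Section LL.
Variable R : realType.
Variable T : finType.
Variable F : {set T} -> R.

Definition ge_rel : rel R := fun u v => v <= u.

Lemma ge_trans : transitive ge_rel.
Proof. by move=> y x z /= h1 h2; apply: le_trans h2 h1. Qed.
Lemma ge_anti : antisymmetric ge_rel.
Proof. by move=> u v /andP[h1 h2]; apply/eqP; rewrite eq_le; apply/andP; split. Qed.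
Lemma ge_total : total ge_rel.
Proof. by move=> u v; rewrite /ge_rel orbC le_total. Qed.

Definition lev (z : T -> R) (t : R) : {set T} := [set k | t <= z k].

Fixpoint L (lv : R -> {set T}) (w : seq R) : R :=
  match w with
  | [::] => 0
  | u :: r => match r with
              | [::] => F setT * u
              | v :: _ => F (lv u) * (u - v) + L lv r
              end
  end.

Fixpoint Pre (lv : R -> {set T}) (w : seq R) (h : R) : R :=
  match w with
  | [::] => 0
  | u :: r => F (lv u) * (u - head h r) + Pre lv r h
  end.

Lemma Lcat lv w1 h r : L lv (w1 ++ h :: r) = Pre lv w1 h + L lv (h :: r).
Proof.
elim: w1 => [|u w1 IH] /=; first by rewrite add0r.
case: w1 IH => [|v w1] IH /=; first by rewrite addr0.
by move: IH => /= ->; rewrite addrA.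
Qed.

Lemma Lnth lv d u r : L lv (u :: r) =
  \sum_(j < size r) F (lv (nth d (u :: r) j)) * (nth d (u :: r) j - nth d (u :: r) j.+1)
  + F setT * last u r.
Proof.
elim: r u => [|v r IH] u /=; first by rewrite big_ord0 add0r.
rewrite big_ord_recl -addrA; congr (_ + _); move: (IH v) => /= ->; done.
Qed.

Lemma L_ext lv lv' w : (forall t, t \in w -> lv t = lv' t) -> L lv w = L lv' w.
Proof.
elim: w => [|u w IH] //= H.
case: w IH H => [|v w] IH H /=; first done.
congr (_ + _); first by rewrite H ?mem_head.
apply: IH => t Ht; apply: H; by rewrite inE Ht orbT.
Qed.

Lemma Pre_ext lv lv' w h : (forall t, t \in w -> lv t = lv' t) -> Pre lv w h = Pre lv' w h.
Proof.
elim: w => [|u w IH] //= H.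
rewrite H ?mem_head // IH // => t Ht; apply: H; by rewrite inE Ht orbT.
Qed.

Lemma L_le lv lv' w : sorted ge_rel w -> (forall t, F (lv' t) <= F (lv t)) ->
  L lv' w <= L lv w.
Proof.
elim: w => [|u w IH] //= Hs H.
case: w IH Hs => [|v w] IH /= Hs //.
case/andP: Hs => Huv Hs.
apply: lerD; last exact: IH.
apply: ler_wpM2r; first by rewrite subr_ge0.
exact: H.
Qed.


Lemma lovasz_L z (k0 : T) :
  lovasz F z = L (lev z) (map z (sort (fun i j => z j <= z i) (enum T))).
Proof.
rewrite /lovasz.
set s := sort _ _.
have ss : sorted (fun i j => z j <= z i) s by apply: sort_sorted => i j; exact: le_total.
have us : uniq s by rewrite sort_uniq enum_uniq.
have ms : forall k, k \in s by move=> k; rewrite mem_sort mem_enum.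
case Es: s ss us ms => [|i0 s'] ss us ms; first by move: (ms k0).
rewrite map_cons (Lnth _ (z i0)) size_map; congr (_ + _); last by rewrite last_map.
apply: eq_bigr => j _.
have trT : transitive (fun i j : T => z j <= z i).
  by move=> y x w /= h1 h2; apply: le_trans h1.
have reT : reflexive (fun i j : T => z j <= z i) by move=> y.
have hj : (j < size (i0 :: s'))%N by rewrite /= ltnS ltnW.
have hj1 : (j.+1 < size (i0 :: s'))%N by rewrite /= ltnS.
rewrite -map_cons !(nth_map i0) //.
have [->|hne] := eqVneq (z (nth i0 (i0 :: s') j)) (z (nth i0 (i0 :: s') j.+1)).
  by rewrite subrr !mulr0.
have hlt : z (nth i0 (i0 :: s') j.+1) < z (nth i0 (i0 :: s') j).
  rewrite lt_neqAle eq_sym hne andTb.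
  have H := sorted_leq_nth trT reT i0 ss; exact: (H j j.+1).
congr (F _ * _); apply/setP => k; rewrite !in_set (in_take _ (ms k)).
have hk : (index k (i0 :: s') < size (i0 :: s'))%N by rewrite index_mem ms.
have Ek : nth i0 (i0 :: s') (index k (i0 :: s')) = k by rewrite nth_index ?ms.
have mono : forall p q, (p < size (i0 :: s'))%N -> (q < size (i0 :: s'))%N -> (p <= q)%N ->
   z (nth i0 (i0 :: s') q) <= z (nth i0 (i0 :: s') p).
  by move=> p q hp hq hpq; have H := sorted_leq_nth trT reT i0 ss; exact: (H p q).
case: ltnP => hi.
  by apply/esym; rewrite -Ek; apply: mono => //; rewrite -ltnS.
apply/esym/negbTE; rewrite -ltNge -Ek.
by apply: le_lt_trans hlt; apply: mono.
Qed.

Lemma Lins_mid (F0 : F set0 = 0) z (k0 : T) (w1 r : seq R) t :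
  pairwise ge_rel (w1 ++ r) -> (forall u, u \in w1 -> t < u) ->
  (forall v, v \in r -> v <= t) -> (forall k, z k \in w1 ++ r) ->
  L (lev z) (w1 ++ t :: r) = L (lev z) (w1 ++ r).
Proof.
case/lastP: w1 => [|w1 s] Hp H1 H2 Hv.
  rewrite !cat0s in Hp Hv *.
  case: r Hp H2 Hv => [|s r] Hp H2 Hv; first by move: (Hv k0).
  have -> : L (lev z) [:: t, s & r] = F (lev z t) * (t - s) + L (lev z) (s :: r) by [].
  have [->|hne] := eqVneq t s; first by rewrite subrr mulr0 add0r.
  have hst : s < t by rewrite lt_neqAle eq_sym hne H2 ?mem_head.
  suff -> : lev z t = set0 by rewrite F0 mul0r add0r.
  apply/setP => k; rewrite !inE; apply/negbTE; rewrite -ltNge.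
  apply: le_lt_trans hst.
  move: (Hv k); rewrite inE => /orP[/eqP->//|hk].
  move: Hp; rewrite pairwise_cons => /andP[/allP/(_ _ hk) //].
have Hge : forall u, u \in rcons w1 s -> s <= u.
  move=> u; rewrite mem_rcons inE => /orP[/eqP->//|hu].
  move: Hp; rewrite -cats1 -catA pairwise_cat => /and3P[/allrelP H _ _].
  by apply: (H u s hu); rewrite mem_head.
have hts : t < s by apply: H1; rewrite mem_rcons mem_head.
move: Hv; rewrite -!cats1 -!catA /= => Hv.
rewrite !Lcat; congr (_ + _).
case: r Hp H2 Hv => [|s' r] Hp H2 Hv.
  rewrite /=.
  have -> : lev z s = setT.
    apply/setP => k; rewrite !inE; apply: Hge.
    by move: (Hv k); rewrite cats1.
  by rewrite mulrBr subrK.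
have -> : L (lev z) [:: s, t, s' & r] =
  F (lev z s) * (s - t) + (F (lev z t) * (t - s') + L (lev z) (s' :: r)) by [].
have -> : L (lev z) [:: s, s' & r] = F (lev z s) * (s - s') + L (lev z) (s' :: r) by [].
have [->|hne] := eqVneq t s'; first by rewrite subrr mulr0 add0r.
have hst : s' < t by rewrite lt_neqAle eq_sym hne H2 ?mem_head.
have -> : lev z t = lev z s.
  apply/setP => k; rewrite !inE; apply/idP/idP => hk.
    move: (Hv k); rewrite mem_cat => /orP[hk'|hk'].
      by apply: Hge; rewrite -cats1 mem_cat hk'.
    move: hk'; rewrite in_cons => /orP[/eqP->//|hk''].
    exfalso; move: hk; rewrite leNgt => /negP; apply.
    apply: le_lt_trans hst.
    move: hk''; rewrite in_cons => /orP[/eqP->//|hk3].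
    move: Hp; rewrite -cats1 -catA pairwise_cat => /and3P[_ _].
    by rewrite /= => /andP[_ /andP[/allP/(_ _ hk3)]].
  by apply: le_trans hk; apply: ltW.
by rewrite addrA -mulrDr addrA subrK.
Qed.

Lemma Lins (F0 : F set0 = 0) z (k0 : T) (w : seq R) t :
  sorted ge_rel w -> (forall k, z k \in w) ->
  L (lev z) (sort ge_rel (t :: w)) = L (lev z) w.
Proof.
move=> Hs Hv.
set w1 := [seq u <- w | t < u].
set r := [seq u <- w | predC (fun u => t < u) u].
have Hp : pairwise ge_rel w by rewrite -sorted_pairwise //; exact: ge_trans.
have H1 : forall u, u \in w1 -> t < u by move=> u; rewrite mem_filter => /andP[].
have H2 : forall v, v \in r -> v <= t.
  by move=> v; rewrite mem_filter /= -leNgt => /andP[].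
have Hp1 : pairwise ge_rel (w1 ++ r).
  rewrite pairwise_cat (pairwise_filter _ Hp) (pairwise_filter _ Hp) !andbT.
  apply/allrelP => u v hu hv; rewrite /ge_rel.
  by apply: le_trans (H2 _ hv) (ltW (H1 _ hu)).
have Ew : w1 ++ r = w.
  apply: (sorted_eq ge_trans ge_anti); rewrite ?sorted_pairwise //; try exact: ge_trans.
  by rewrite perm_filterC.
have Es : sort ge_rel (t :: w) = w1 ++ t :: r.
  apply: (sorted_eq ge_trans ge_anti).
  - apply: sort_sorted; exact: ge_total.
  - rewrite sorted_pairwise; last exact: ge_trans.
    rewrite pairwise_cat pairwise_cons (pairwise_filter _ Hp) (pairwise_filter _ Hp) !andbT.
    apply/andP; split.
      apply/allrelP => u v hu; rewrite inE => /orP[/eqP->|hv]; rewrite /ge_rel.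
        exact: ltW (H1 _ hu).
      by apply: le_trans (H2 _ hv) (ltW (H1 _ hu)).
    by apply/allP => v hv; exact: H2.
  - rewrite perm_sort -{1}Ew.
    by rewrite perm_sym (perm_catCA w1 [:: t] r).
rewrite Es -{1}Ew; apply: Lins_mid => //.
by move=> k; rewrite Ew.
Qed.

Lemma Lsortcat (F0 : F set0 = 0) z (k0 : T) (w : seq R) u :
  sorted ge_rel w -> (forall k, z k \in w) ->
  L (lev z) (sort ge_rel (u ++ w)) = L (lev z) w.
Proof.
move=> Hs Hv; elim: u => [|t u IH]; first by rewrite /= sorted_sort //; exact: ge_trans.
have -> : sort ge_rel ((t :: u) ++ w) = sort ge_rel (t :: sort ge_rel (u ++ w)).
  apply/(perm_sortP ge_total ge_trans ge_anti).
  by rewrite /= perm_cons perm_sym perm_sort perm_refl.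
have Hs' : sorted ge_rel (sort ge_rel (u ++ w)) by apply: sort_sorted; exact: ge_total.
have Hv' : forall k, z k \in sort ge_rel (u ++ w) by move=> k; rewrite mem_sort mem_cat Hv orbT.
by rewrite (Lins F0 k0 t Hs' Hv') IH.
Qed.

Lemma lovasz_any (F0 : F set0 = 0) z (k0 : T) (w : seq R) :
  sorted ge_rel w -> (forall k, z k \in w) -> lovasz F z = L (lev z) w.
Proof.
move=> Hs Hv; rewrite (lovasz_L z k0).
set w0 := map z _.
have Hs0 : sorted ge_rel w0.
  rewrite sorted_map; apply: sort_sorted => i j; exact: le_total.
have Hv0 : forall k, z k \in w0 by move=> k; rewrite map_f // mem_sort mem_enum.
rewrite -(Lsortcat F0 k0 w Hs0 Hv0) -(Lsortcat F0 k0 w0 Hs Hv).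
congr (L _ _); apply/(perm_sortP ge_total ge_trans ge_anti).
by rewrite perm_catC.
Qed.

Definition zmove (z : T -> R) (u c : R) (k : T) := if z k == u then c else z k.

Lemma move_core (F0 : F set0 = 0) z (k0 : T) (w : seq R) u1 :
  sorted ge_rel w -> uniq w -> (forall k, z k \in w) -> u1 \in w ->
  (exists k, u1 < z k) -> (exists k, z k < u1) ->
  exists c, [/\ c \in w, c != u1 & lovasz F (zmove z u1 c) <= lovasz F z].
Proof.
move=> Hs Hu Hv hu1 [kh hkh] [kl hkl].
have Hp : pairwise ge_rel w by rewrite -sorted_pairwise //; exact: ge_trans.
case/splitPr: hu1 Hs Hu Hv Hp => w_pre w_post Hs Hu Hv Hp.
have Hpc := Hp; rewrite pairwise_cat pairwise_cons in Hpc.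
case/and4P: Hpc => Hall Hppre /allP Hpost Hppost.
case/lastP: w_pre Hs Hu Hv Hp Hall Hppre => [|w1 p] Hs Hu Hv Hp Hall Hppre.
  exfalso; move: (Hv kh); rewrite cat0s in_cons => /orP[/eqP e|hk].
    by move: hkh; rewrite e ltxx.
  by move: (Hpost _ hk); rewrite /ge_rel leNgt hkh.
case: w_post Hs Hu Hv Hp Hall Hpost Hppost => [|q w2] Hs Hu Hv Hp Hall Hpost Hppost.
  exfalso; move: (Hv kl); rewrite mem_cat => /orP[hk|hk].
    move/allrelP: Hall => /(_ (z kl) u1 hk (mem_head _ _)).
    by rewrite /ge_rel leNgt hkl.
  by move: hk hkl; rewrite inE => /eqP ->; rewrite ltxx.
have EW : rcons w1 p ++ u1 :: q :: w2 = w1 ++ [:: p, u1, q & w2] by rewrite -cats1 -catA.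
rewrite EW in Hs Hu Hv Hp *.
have ge_w1 : forall t, t \in w1 -> p < t.
  move=> t ht; rewrite lt_neqAle.
  move: Hu; rewrite cat_uniq => /and3P[_ hn _].
  have -> : (p != t).
    apply/eqP => e; move/hasPn: hn => /(_ p (mem_head _ _)).
    by rewrite e /= ht.
  move: Hp; rewrite pairwise_cat => /and3P[/allrelP H _ _].
  by apply: (H t p ht); rewrite mem_head.
have Hp2 := Hp; rewrite pairwise_cat !pairwise_cons in Hp2.
case/and5P: Hp2 => _ _ /= /and3P[hpu hpq _] /andP[huq _] /andP[/allP hq2 _].
move: Hu; rewrite cat_uniq !cons_uniq !in_cons => /and3P[_ _ /and4P[hpn hun _ _]].
have hpu' : u1 < p.
  rewrite lt_neqAle (hpu : u1 <= p) andbT; apply/eqP => e; move: hpn; by rewrite e eqxx.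
have huq' : q < u1.
  rewrite lt_neqAle (huq : q <= u1) andbT; apply/eqP => e; move: hun; by rewrite e eqxx.
have le_w2 : forall t, t \in q :: w2 -> t <= q.
  by move=> t; rewrite in_cons => /orP[/eqP->//|/hq2].
have key : forall k, z k < p -> q < z k -> z k = u1.
  move=> k h1 h2; move: (Hv k); rewrite mem_cat => /orP[hk|].
    by move: (ge_w1 _ hk); rewrite ltNge (ltW h1).
  rewrite !in_cons => /or4P[/eqP e|/eqP e|/eqP e|hk] //.
  - by move: h1; rewrite e ltxx.
  - by move: h2; rewrite e ltxx.
  - by move: h2; rewrite ltNge (hq2 _ hk : z k <= q).
set W := w1 ++ [:: p, u1, q & w2].
have HL : forall lv, L lv W = Pre lv w1 p +
   (F (lv p) * (p - u1) + (F (lv u1) * (u1 - q) + L lv (q :: w2))).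
  by move=> lv; rewrite /W Lcat.
have Hvm : forall c, c \in W -> forall k, zmove z u1 c k \in W.
  by move=> c hc k; rewrite /zmove; case: eqP.
have E1 : forall c, c <= p -> forall t, t \in w1 -> lev (zmove z u1 c) t = lev z t.
  move=> c hc t ht; apply/setP => k; rewrite !inE /zmove; case: eqP => // ->.
  have := ge_w1 _ ht => h.
  by rewrite !leNgt (le_lt_trans hc h) (lt_trans hpu' h).
have E2 : forall c, q <= c -> forall t, t \in q :: w2 -> lev (zmove z u1 c) t = lev z t.
  move=> c hc t ht; apply/setP => k; rewrite !inE /zmove; case: eqP => // ->.
  have := le_w2 _ ht => h.
  by rewrite (le_trans h hc) (le_trans h (ltW huq')).
have HWs : sorted ge_rel W by [].
have Hmid : forall c, c \in W -> q <= c -> c <= p ->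
    lovasz F (zmove z u1 c) = Pre (lev z) w1 p +
   (F (lev (zmove z u1 c) p) * (p - u1) +
     (F (lev (zmove z u1 c) u1) * (u1 - q) + L (lev z) (q :: w2))).
  move=> c hc h1 h2; rewrite (lovasz_any F0 k0 HWs (Hvm c hc)) HL.
  by rewrite (Pre_ext _ (E1 c h2)) (L_ext (E2 c h1)).
have Hz : lovasz F z = Pre (lev z) w1 p +
   (F (lev z p) * (p - u1) + (F (lev z u1) * (u1 - q) + L (lev z) (q :: w2))).
  by rewrite (lovasz_any F0 k0 HWs Hv) HL.
have pW : p \in W by rewrite mem_cat !in_cons eqxx !orbT.
have qW : q \in W by rewrite mem_cat !in_cons eqxx !orbT.
have d1 : 0 <= p - u1 by rewrite subr_ge0 ltW.
have d2 : 0 <= u1 - q by rewrite subr_ge0 ltW.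
case: (leP (F (lev z u1)) (F (lev z p))) => hF.
  exists p; split => //; first by rewrite gt_eqF.
  rewrite (Hmid p pW (ltW (lt_trans huq' hpu')) (lexx p)) Hz.
  have -> : lev (zmove z u1 p) p = lev z u1.
    apply/setP => k; rewrite !inE /zmove; case: eqP => [->|hk]; first by rewrite !lexx.
    apply/idP/idP => h; first exact: le_trans (ltW hpu') h.
    rewrite leNgt; apply/negP => h'; apply: hk; apply: key h' _.
    exact: lt_le_trans huq' h.
  have -> : lev (zmove z u1 p) u1 = lev z u1.
    apply/setP => k; rewrite !inE /zmove; case: eqP => [->|hk] //.
    by rewrite lexx (ltW hpu').
  rewrite lerD2l lerD2r; exact: ler_wpM2r.
exists q; split => //; first by rewrite lt_eqF.
rewrite (Hmid q qW (lexx q) (ltW (lt_trans huq' hpu'))) Hz.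
have -> : lev (zmove z u1 q) p = lev z p.
  apply/setP => k; rewrite !inE /zmove; case: eqP => [->|hk] //.
  by rewrite !leNgt hpu' (lt_trans huq' hpu').
have -> : lev (zmove z u1 q) u1 = lev z p.
  apply/setP => k; rewrite !inE /zmove; case: eqP => [->|hk].
    by rewrite !leNgt hpu' huq'.
  apply/idP/idP => h; last exact: le_trans (ltW hpu') h.
  rewrite leNgt; apply/negP => h'; apply: hk; apply: key h' _.
  exact: lt_le_trans huq' h.
rewrite lerD2l lerD2l lerD2r; apply: ler_wpM2r => //.
exact: ltW.
Qed.

End LL.

Lemma part1 (R : realType) (N M : nat) (G : {set ('I_N + 'I_M)} -> R)
  (Gnn : forall S, 0 <= G S) (G0 : G set0 = 0) (GT : G setT = 0)
  (x : 'I_N -> R) (a b : R) (hxa : forall i, a <= x i) (hxb : forall i, x i <= b)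
  (i0 : 'I_N) (xb : 'I_M -> R) :
  gext G x (proj_ab a b xb) <= gext G x xb.
Proof.
set z := joinv x xb; set z' := joinv x (proj_ab a b xb).
set w := sort (@ge_rel R) (a :: b :: map z (enum {: 'I_N + 'I_M})).
have Hs : sorted (@ge_rel R) w by apply: sort_sorted; exact: ge_total.
have hmem : forall k, z k \in map z (enum {: 'I_N + 'I_M}).
  by move=> k; rewrite map_f // mem_enum.
have Hv : forall k, z k \in w.
  by move=> k; rewrite mem_sort !inE hmem ?orbT.
have Hv' : forall k, z' k \in w.
  case=> [i|j]; first exact: (Hv (inl i)).
  have : proj_ab a b xb j = a \/ proj_ab a b xb j = b \/ proj_ab a b xb j = xb j.
    rewrite /proj_ab minEle maxEle.
    by case: (xb j <= a); case: ifP => _; auto.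
  rewrite /z' /= mem_sort !inE.
  case=> [->|[->|->]]; rewrite ?eqxx ?orbT //.
  by have := hmem (inr j); rewrite /= => ->; rewrite !orbT.
rewrite /gext -/z -/z' (lovasz_any G0 (inl i0) Hs Hv) (lovasz_any G0 (inl i0) Hs Hv').
apply: L_le => // t.
have Hz'b : forall k, z' k <= b.
  by case=> [i|j] /=; [exact: hxb | rewrite /proj_ab ge_min lexx orbT].
have Hz'a : forall k, a <= z' k.
  case=> [i|j] /=; first exact: hxa.
  rewrite /proj_ab le_min le_max lexx orbT /=.
  exact: le_trans (hxa i0) (hxb i0).
case: (ltP b t) => hbt.
  suff -> : lev z' t = set0 by rewrite G0.
  apply/setP => k; rewrite !inE; apply/negbTE; rewrite -ltNge.
  exact: le_lt_trans (Hz'b k) hbt.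
case: (leP t a) => hta.
  suff -> : lev z' t = setT by rewrite GT.
  apply/setP => k; rewrite !inE; exact: le_trans hta (Hz'a k).
suff -> : lev z' t = lev z t by [].
apply/setP; case=> [i|j]; rewrite !inE //=.
rewrite /proj_ab le_min hbt andbT le_max.
by rewrite (leNgt t a) hta orbF.
Qed.

Lemma round (R : realType) (N M : nat) (G : {set ('I_N + 'I_M)} -> R)
  (G0 : G set0 = 0)
  (x : 'I_N -> R) (a b : R) (hxa : forall i, a <= x i) (hxb : forall i, x i <= b)
  (ia ib : 'I_N) (hia : x ia = a) (hib : x ib = b) :
  forall xb, box a b xb ->
  exists f : {ffun 'I_M -> 'I_N}, gext G x (fun j => x (f j)) <= gext G x xb.
Proof.
pose cnt (xb : 'I_M -> R) := size (undup (map (joinv x xb) (enum {: 'I_N + 'I_M}))).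
have fin : forall xb, (forall j, exists i, x i = xb j) ->
    exists f : {ffun 'I_M -> 'I_N}, gext G x (fun j => x (f j)) <= gext G x xb.
  move=> xb h; exists [ffun j => odflt ia [pick i | x i == xb j]].
  suff -> : (fun j => x ([ffun j => odflt ia [pick i | x i == xb j]] j)) = xb by [].
  apply: boolp.funext => j; rewrite ffunE; case: pickP => [i /eqP //|H].
  by have [i hi] := h j; move: (H i); rewrite hi eqxx.
have step : forall xb, box a b xb -> (forall j, exists i, x i = xb j) \/
    exists xb', [/\ box a b xb', (cnt xb' < cnt xb)%N & gext G x xb' <= gext G x xb].
  move=> xb hbox.
  case: (boolP [forall j, [exists i, x i == xb j]]) => hall.
    left => j; move/forallP: hall => /(_ j) /existsP [i /eqP]; eauto.
  right; move/forallPn: hall => [j0]; rewrite negb_exists => /forallP hj0.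
  set z := joinv x xb; set u1 := xb j0.
  set s := undup (map z (enum {: 'I_N + 'I_M})).
  set w := sort (@ge_rel R) s.
  have Hs : sorted (@ge_rel R) w by apply: sort_sorted; exact: ge_total.
  have Hu : uniq w by rewrite sort_uniq undup_uniq.
  have Hms : forall k, z k \in s by move=> k; rewrite mem_undup map_f // mem_enum.
  have Hv : forall k, z k \in w by move=> k; rewrite mem_sort.
  have hzab : forall k, a <= z k <= b.
    by case=> [i|j] /=; [rewrite hxa hxb | exact: hbox].
  have hu1 : u1 \in w by exact: (Hv (inr j0)).
  have hi : exists k, u1 < z k.
    exists (inl ib); rewrite /= hib lt_neqAle.
    have /andP[_ ->] := hbox j0; rewrite andbT.
    by move: (hj0 ib); rewrite hib eq_sym.
  have lo : exists k, z k < u1.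
    exists (inl ia); rewrite /= hia lt_neqAle.
    have /andP[-> _] := hbox j0; rewrite andbT.
    by move: (hj0 ia); rewrite hia.
  have [c [hc hcu hle]] := move_core G0 (inl ia) Hs Hu Hv hu1 hi lo.
  have hcs : c \in s by rewrite -(mem_sort (@ge_rel R)).
  have hcab : a <= c <= b.
    by move: hcs; rewrite mem_undup => /mapP [k _ ->]; exact: hzab.
  set xb' := fun j => if xb j == u1 then c else xb j.
  have Ez : joinv x xb' = zmove z u1 c.
    apply: boolp.funext; case=> [i|j]; rewrite /zmove /= //.
    by rewrite (negbTE (hj0 i)).
  exists xb'; split.
  - by move=> j; rewrite /xb'; case: eqP => _ //; exact: hbox.
  - rewrite /cnt Ez -/s.
    have sub : {subset undup (map (zmove z u1 c) (enum {: 'I_N + 'I_M})) <= rem u1 s}.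
      move=> v; rewrite mem_undup => /mapP [k _ ->].
      rewrite mem_rem_uniq ?undup_uniq // inE /zmove.
      have [hk|hk] := eqVneq (z k) u1; first by rewrite hcu hcs.
      by rewrite hk Hms.
    have := uniq_leq_size (undup_uniq _) sub.
    rewrite size_rem; last by rewrite -(mem_sort (@ge_rel R)).
    move=> h; apply: (leq_ltn_trans h); rewrite ltn_predL.
    by move: (Hms (inr j0)); case: (s).
  - by rewrite /gext Ez.
suff H : forall n xb, (cnt xb <= n)%N -> box a b xb ->
    exists f : {ffun 'I_M -> 'I_N}, gext G x (fun j => x (f j)) <= gext G x xb.
  by move=> xb; apply: H (leqnn _).
elim=> [|n IH] xb hn hbox; case: (step xb hbox) => [h|[xb' [hb' hlt hle]]];
  try exact: fin.
  by move: hlt; rewrite ltnNge (leq_trans hn (leq0n _)).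
have hn' : (cnt xb' <= n)%N by rewrite -ltnS; apply: leq_trans hn.
have [f hf] := IH xb' hn' hb'.
by exists f; apply: le_trans hle.
Qed.

Unset Implicit Arguments.
Set Strict Implicit.

Theorem lemma3 (R : realType) (N M : nat) (G : {set ('I_N + 'I_M)} -> R)
  (Gsub : submodular G) (Gnn : forall S, 0 <= G S)
  (G0 : G set0 = 0) (GT : G setT = 0)
  (x : 'I_N -> R) (a b : R)
  (ha : (forall i, a <= x i) /\ (exists i, x i = a))
  (hb : (forall i, x i <= b) /\ (exists i, x i = b)) :
  (forall xb : 'I_M -> R, gext G x (proj_ab a b xb) <= gext G x xb) /\
  (forall a' b' : R, a' < a -> b < b' ->
     exists m : R,
       [/\ is_min_on (fun _ : 'I_M -> R => True) (gext G x) m,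
           is_min_on (box a' b') (gext G x) m
         & is_min_on (box a b) (gext G x) m]).
Proof.
case: ha => hxa [ia hia]; case: hb => hxb [ib hib].
have P1 : forall xb : 'I_M -> R, gext G x (proj_ab a b xb) <= gext G x xb.
  by move=> xb; apply: part1.
split => // a' b' ha' hb'.
pose h := fun f : {ffun 'I_M -> 'I_N} => gext G x (fun j => x (f j)).
case: (@arg_minP _ _ _ [ffun=> ia] predT h isT) => fs _ Hfs.
have hab : a <= b by apply: le_trans (hxa ia) (hxb ia).
have key : forall xb, h fs <= gext G x xb.
  move=> xb.
  have hbox : box a b (proj_ab a b xb).
    move=> j; rewrite /proj_ab le_min le_max lexx orbT hab ge_min lexx orbT.
    by [].
  have [f hf] := round G0 hxa hxb hia hib hbox.
  apply: le_trans (Hfs f isT) _; apply: le_trans hf (P1 xb).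
exists (h fs); split; split; try (by move=> y _; apply: key);
  exists (fun j => x (fs j)) => //.
- by move=> j; rewrite (ltW (lt_le_trans ha' (hxa _))) (ltW (le_lt_trans (hxb _) hb')).
- by move=> j; rewrite hxa hxb.
Qed.
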